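(* Let $k$ be a field, $n\ge 2$, and $d_1,\ldots,d_n$ positive integers. The algebra $A=k[x_1, \ldots, x_n]/(x_1^{d_1}, \ldots, x_n^{d_n})$ has the weak Lefschetz property if and only if multiplication by $(x_1+ \dots + x_{n-1})^{d_n}$ has maximal rank in every degree on $B=k[x_1, \ldots, x_{n-1}]/(x_1^{d_1}, \ldots, x_{n-1}^{d_{n-1}})$, i.e. for every $i$ the map $B_i\to B_{i+d_n}$, $b\mapsto (x_1+\cdots+x_{n-1})^{d_n}b$, is injective or surjective.
   Context: Algebras are graded by degree, $A=\bigoplus_{i\ge0}A_i$. A graded artinian algebra $A$ has the weak Lefschetz property if there is a linear form $\ell\in A_1$ such that for every $i$ the map $A_i\to A_{i+1}$, $a\mapsto \ell a$, is injective or surjective. *)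

(* Defs.v *)
From HB Require Import structures.
From mathcomp Require Import all_boot all_order all_algebra.
From mathcomp Require Import mpoly.
Set Implicit Arguments. Unset Strict Implicit. Unset Printing Implicit Defensive.
Import Order.TTheory GRing.Theory.
Local Open Scope ring_scope.

Definition in_mci_ideal (k : fieldType) (n : nat) (d : 'I_n -> nat)
    (f : {mpoly k[n]}) : Prop :=
  exists g : 'I_n -> {mpoly k[n]}, f = \sum_(j < n) g j * 'X_j ^+ d j.

(* For A = k[x_1..x_n]/(x_j^{d_j}) with graded pieces A_i = (homogeneous
   degree-i polynomials) modulo the ideal, and f homogeneous of degree e,
   the map A_i -> A_{i+e}, a |-> f a, is injective or surjective. *)
Definition mult_inj_or_surj (k : fieldType) (n : nat) (d : 'I_n -> nat)
    (f : {mpoly k[n]}) (e i : nat) : Prop :=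
  (forall g : {mpoly k[n]}, g \is i.-homog ->
      in_mci_ideal d (f * g) -> in_mci_ideal d g)
  \/
  (forall h : {mpoly k[n]}, h \is (i + e)%N.-homog ->
      exists g : {mpoly k[n]}, g \is i.-homog /\ in_mci_ideal d (h - f * g)).

Definition has_WLP (k : fieldType) (n : nat) (d : 'I_n -> nat) : Prop :=
  exists l : {mpoly k[n]}, l \is 1%N.-homog /\
    forall i : nat, mult_inj_or_surj d l 1 i.

Lemma last_index_proof (n : nat) : (0 < n)%N -> (n.-1 < n)%N.
Proof. by rewrite ltn_predL. Qed.

Definition last_index (n : nat) (hn : (0 < n)%N) : 'I_n :=
  Ordinal (last_index_proof hn).

Definition init_exps (n : nat) (d : 'I_n -> nat) : 'I_n.-1 -> nat :=
  fun j => d (widen_ord (leq_pred n) j).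

(* Main.v *)
Require Import Defs.
From HB Require Import structures.
From mathcomp Require Import all_boot all_order all_algebra.
From mathcomp Require Import mpoly.
From mathcomp Require Import zify ring.
Set Implicit Arguments. Unset Strict Implicit. Unset Printing Implicit Defensive.
Import Order.TTheory GRing.Theory.
Local Open Scope ring_scope.


Lemma neq_pred R : (0 < R)%N -> (R == R.-1) = false.
Proof. by case: R => //= R _; rewrite gtn_eqF. Qed.

Section Ideal.
Variables (k : fieldType) (N : nat) (D : 'I_N -> nat).
Implicit Types (f g h : {mpoly k[N]}) (m : 'X_{1..N}).

Definition stdm m := [forall j, m j < D j]%N.

Lemma coefMX_gen f m u : ~~ (u <= m)%MM -> (f * 'X_[u])@_m = 0.
Proof.
move=> nle; apply/eqP; rewrite mcoeff_eq0 (perm_mem (msuppMX f u)); apply/negP.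
move=> /mapP [m' _ Em].
by move: nle; rewrite Em => /negP; apply; apply/mnm_lepP => i; rewrite mnmDE leq_addr.
Qed.

Lemma idealK f : in_mci_ideal D f <-> (forall m, stdm m -> f@_m = 0).
Proof.
split.
  case=> g -> m /forallP sm; rewrite raddf_sum /= big1 // => j _.
  rewrite mpolyXn coefMX_gen //; apply/negP => /mnm_lepP /(_ j).
  by rewrite mulmnE mnm1E eqxx mul1n leqNgt sm.
move=> H.
pose pj m := [pick j | (D j <= m j)%N].
exists (fun j => \sum_(m <- msupp f | pj m == Some j) f@_m *: 'X_[(m - U_(j) *+ D j)%MM]).
have pjS m j : pj m = Some j -> (D j <= m j)%N.
  by rewrite /pj; case: pickP => // x Hx [<-].
have pjN m : pj m = None -> stdm m.
  rewrite /pj; case: pickP => // Hn _; apply/forallP => j.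
  by rewrite ltnNge Hn.
apply/esym; under eq_bigr do rewrite mulr_suml big_mkcond.
rewrite exchange_big /= [RHS]mpolyE; apply: eq_bigr => m _.
case E: (pj m) => [j|]; last first.
  rewrite big1 //.
  by rewrite H ?scale0r // pjN.
rewrite (bigD1 j) ?E ?eqxx //= big1 ?addr0; last first.
  by move=> j' /negbTE nj; case: eqP => // -[] /eqP; rewrite eq_sym nj.
rewrite -scalerAl mpolyXn -mpolyXD submK //; apply/mnm_lepP => i.
rewrite mulmnE mnm1E; case: eqP => [<-|]; first by rewrite mul1n pjS.
by rewrite mul0n.
Qed.

Local Notation inI := (@in_mci_ideal k N D).

Lemma inI0 : inI 0.
Proof. by apply/idealK => m _; rewrite mcoeff0. Qed.

Lemma inID f g : inI f -> inI g -> inI (f + g).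
Proof. by move=> /idealK hf /idealK hg; apply/idealK => m sm; rewrite mcoeffD hf ?hg ?addr0. Qed.

Lemma inIN f : inI f -> inI (- f).
Proof. by move=> /idealK hf; apply/idealK => m sm; rewrite mcoeffN hf ?oppr0. Qed.

Lemma inIB f g : inI f -> inI g -> inI (f - g).
Proof. by move=> hf hg; apply/inID/inIN. Qed.

Lemma inIZ c f : inI f -> inI (c *: f).
Proof. by move=> /idealK hf; apply/idealK => m sm; rewrite mcoeffZ hf ?mulr0. Qed.

Lemma inIMl f g : inI g -> inI (f * g).
Proof.
case=> G ->; exists (fun j => f * G j); rewrite mulr_sumr.
by apply: eq_bigr => j _; rewrite mulrA.
Qed.

Lemma inIMr f g : inI f -> inI (f * g).
Proof. by rewrite mulrC; apply: inIMl. Qed.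

Lemma inI_sum (I : Type) (r : seq I) (P : pred I) (F : I -> {mpoly k[N]}) :
  (forall i, P i -> inI (F i)) -> inI (\sum_(i <- r | P i) F i).
Proof. by move=> H; elim/big_ind: _ => //; [apply: inI0 | apply: inID]. Qed.

Lemma inI_eq f g : inI (f - g) -> inI g -> inI f.
Proof. by move=> h1 h2; rewrite -[f](subrK g); apply: inID. Qed.

End Ideal.

Section Homog.
Variables (R : ringType) (N : nat) (mf : measure N).
Implicit Types (f g h p : {mpoly R[N]}) (m : 'X_{1..N}).

Lemma homogC d p : p \is d.-homog for mf <-> (forall m, mf m != d -> p@_m = 0).
Proof.
split; first by move=> H m; apply: dhomog_nemf_coeff.
move=> H; apply/dhomogP => m; rewrite mcoeff_msupp => nz.
by apply/eqP; apply: contraNT nz => /H ->.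
Qed.

Lemma pihomogC d p m : (pihomog mf d p)@_m = if mf m == d then p@_m else 0.
Proof.
rewrite pihomogE {3}[p]mpolyE !raddf_sum /= big_mkcond /=.
case: ifP => Hm.
  apply: eq_bigr => m' _; rewrite mcoeffZ mcoeffX; case: ifP => // Hm'.
  by case: eqP => [E|]; [rewrite E Hm in Hm'|rewrite mulr0].
rewrite big1 // => m' _; case: ifP => Hm' //.
by rewrite mcoeffZ mcoeffX; case: eqP => [E|]; [rewrite -E Hm' in Hm|rewrite mulr0].
Qed.

Lemma pihomogM e r f g : f \is e.-homog for mf ->
  pihomog mf r (f * g) = if (e <= r)%N then f * pihomog mf (r - e) g else 0.
Proof.
move=> hf; set K := maxn (mmeasure mf g) (r - e).+1.
have HK : (mmeasure mf g <= K)%N by rewrite leq_maxl.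
rewrite {1}(pihomog_partitionE HK) mulr_sumr linear_sum /=.
have E s : pihomog mf r (f * pihomog mf s g) =
    if (e + s == r)%N then f * pihomog mf s g else 0.
  case: eqP => [<-|/eqP ne].
    by apply: pihomog_dE; apply: dhomogM => //; apply: pihomogP.
  by apply: (pihomog_ne0 ne); apply: dhomogM => //; apply: pihomogP.
under eq_bigr do rewrite E.
case: leqP => her.
  have lt : (r - e < K)%N by rewrite leq_maxr.
  rewrite (bigD1 (Ordinal lt)) /= ?subnKC ?eqxx // big1 ?addr0 // => s ne.
  case: eqP => // es; move: ne; rewrite -val_eqE /= -es addKn eqxx //.
rewrite big1 // => s _; case: eqP => // es.
by move: her; rewrite -es ltnNge leq_addr.
Qed.

Lemma pihomog_homog d r p : p \is d.-homog for mf -> pihomog mf r p = if d == r then p else 0.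
Proof.
move=> hp; case: eqP => [<-|/eqP ne]; [exact: pihomog_dE | exact: pihomog_ne0 ne hp].
Qed.

End Homog.

Section Scale.
Variables (k : fieldType) (N : nat).
Implicit Types (f g h p : {mpoly k[N]}) (m : 'X_{1..N}) (c a : 'I_N -> k).

Lemma sum_msupp_coef (F : 'X_{1..N} -> k) p m :
  \sum_(m' <- msupp p) p@_m' * (F m' * (m' == m)%:R) = F m * p@_m.
Proof.
rewrite [p in RHS]mpolyE raddf_sum mulr_sumr /=; apply: eq_bigr => m' _.
rewrite mcoeffZ mcoeffX; case: eqP => [->|_]; first by rewrite !mulr1 mulrC.
by rewrite !mulr0.
Qed.

Definition wt c m : k := \prod_(j < N) c j ^+ m j.
Definition sc c p := p \mPo [tuple c j *: 'X_j | j < N].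

Lemma scX c m : sc c 'X_[m] = wt c m *: 'X_[m].
Proof.
rewrite /sc comp_mpolyX; under eq_bigr do rewrite tnth_mktuple exprZn.
by rewrite scaler_prod -mpolyXE_id.
Qed.

Lemma scC c p m : (sc c p)@_m = wt c m * p@_m.
Proof.
rewrite /sc comp_mpolyEX raddf_sum /= -(sum_msupp_coef (wt c)).
by apply: eq_bigr => m' _; rewrite -/(sc c _) scX mcoeffZ mcoeffZ mcoeffX.
Qed.

Lemma scM c f g : sc c (f * g) = sc c f * sc c g.
Proof. exact: rmorphM. Qed.

Lemma scB c f g : sc c (f - g) = sc c f - sc c g.
Proof. exact: raddfB. Qed.

Lemma wt_neq0 c m : (forall j, c j != 0) -> wt c m != 0.
Proof. by move=> H; rewrite prodf_seq_neq0; apply/allP => j _; rewrite expf_neq0. Qed.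

Lemma wtM c c' m : wt (fun j => c j * c' j) m = wt c m * wt c' m.
Proof. by rewrite /wt -big_split /=; apply: eq_bigr => j _; rewrite exprMn. Qed.

Lemma scK c c' p : (forall j, c j * c' j = 1) -> sc c (sc c' p) = p.
Proof.
move=> H; apply/mpolyP => m; rewrite !scC mulrA -wtM.
rewrite /wt big1 ?mul1r // => j _; by rewrite H expr1n.
Qed.

Lemma sc_homog c d p : p \is d.-homog -> sc c p \is d.-homog.
Proof.
by move=> /homogC H; apply/homogC => m /H hm; rewrite scC hm mulr0.
Qed.

Lemma sc_inI (D : 'I_N -> nat) c p : (forall j, c j != 0) ->
  in_mci_ideal D (sc c p) <-> in_mci_ideal D p.
Proof.
move=> H; rewrite !idealK; split => h m sm; last by rewrite scC h ?mulr0.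
by move: (h m sm); rewrite scC => /eqP; rewrite mulf_eq0 (negbTE (wt_neq0 m H)) => /eqP.
Qed.

Definition lin a : {mpoly k[N]} := \sum_(j < N) a j *: 'X_j.

Lemma linC a m : (lin a)@_m = \sum_(j < N) a j * (U_(j)%MM == m)%:R.
Proof. by rewrite raddf_sum; apply: eq_bigr => j _ /=; rewrite mcoeffZ mcoeffX. Qed.

Lemma lin_homog1 l : l \is 1.-homog -> l = lin (fun j => l@_U_(j)).
Proof.
move=> hl; apply/mpolyP => m; rewrite linC.
case: (mdeg1P m) => [[i /eqP ->]|nm].
  rewrite (bigD1 i) //= eqxx mulr1 big1 ?addr0 // => j ne.
  by rewrite eq_mnm1 (negbTE ne) mulr0.
rewrite (dhomog_nemf_coeff hl); last first.
  by apply/negP => /mdeg1P.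
rewrite big1 // => j _; case: eqP => [E|]; last by rewrite mulr0.
by exfalso; apply: nm; exists j; rewrite E.
Qed.

Lemma lin_whomog (mf : measure N) a e :
  (forall j, a j != 0 -> mf U_(j)%MM = e) -> lin a \is e.-homog for mf.
Proof.
move=> H; apply/homogC => m hm; rewrite linC big1 // => j _.
case: eqP => [E|]; last by rewrite mulr0.
rewrite mulr1; apply/eqP; apply: contraNT hm => /H; by rewrite E => ->.
Qed.

Lemma lin_ext a a' : (forall j, a j = a' j) -> lin a = lin a'.
Proof. by move=> H; apply: eq_bigr => j _; rewrite H. Qed.

Lemma linD a a' : lin a + lin a' = lin (fun j => a j + a' j).
Proof. by rewrite /lin -big_split; apply: eq_bigr => j _; rewrite scalerDl. Qed.

Lemma lin_homog a : lin a \is 1.-homog.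
Proof. by apply: lin_whomog => j _; apply: mdeg1. Qed.

Lemma sc_lin c a : sc c (lin a) = lin (fun j => a j * c j).
Proof.
apply/mpolyP => m; rewrite scC !linC mulr_sumr; apply: eq_bigr => j _.
case: eqP => [<-|]; last by rewrite !mulr0.
rewrite !mulr1 mulrC /wt (bigD1 j) //= mnm1E eqxx expr1 big1 ?mulr1 //.
by move=> i ne; rewrite mnm1E eq_sym (negbTE ne) expr0.
Qed.

Lemma mois_sc (D : 'I_N -> nat) c f e i : (forall j, c j != 0) ->
  mult_inj_or_surj D f e i -> mult_inj_or_surj D (sc c f) e i.
Proof.
move=> H; pose c' := fun j => (c j)^-1.
have H' : forall j, c' j != 0 by move=> j; rewrite invr_eq0.
have cK : forall p, sc c (sc c' p) = p.
  by move=> p; apply: scK => j; rewrite /c' mulfV.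
case=> [Hi|Hs]; [left|right].
  move=> g hg; rewrite -(cK g) -scM !(sc_inI _ _ H) => hfg.
  by apply: Hi => //; apply: sc_homog.
move=> h hh; case: (Hs (sc c' h)); first by apply: sc_homog.
move=> g [hg hI]; exists (sc c g); split; first by apply: sc_homog.
by rewrite -(cK h) -scM -scB sc_inI.
Qed.

End Scale.

Definition wT (N : nat) (T : {set 'I_N}) (m : 'X_{1..N}) : nat := (\sum_(j in T) m j)%N.
Lemma wT0 N T : @wT N T 0%MM = 0%N.
Proof. by rewrite /wT big1 // => j _; rewrite mnm0E. Qed.
Lemma wTD N T : {morph @wT N T : m1 m2 / (m1 + m2)%MM >-> (m1 + m2)%N}.
Proof. by move=> m1 m2; rewrite /wT -big_split; apply: eq_bigr => j _; rewrite mnmDE. Qed.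
HB.instance Definition _ N T := isMeasure.Build N (@wT N T) (wT0 T) (wTD T).

Lemma wT_le N T m : (@wT N T m <= mdeg m)%N.
Proof.
rewrite /wT mdegE [X in (_ <= X)%N](bigID (fun j => j \in T)) /=; exact: leq_addr.
Qed.

Lemma wTU N T j : @wT N T U_(j)%MM = (j \in T).
Proof.
rewrite /wT; case: (boolP (j \in T)) => hj.
  rewrite (bigD1 j) //= mnm1E eqxx big1 ?addn0 // => i /andP [_ ne].
  by rewrite mnm1E eq_sym (negbTE ne).
by rewrite big1 // => i hi; rewrite mnm1E; case: eqP => // E; rewrite E hi in hj.
Qed.

Section Weights.
Variables (k : fieldType) (N : nat) (D : 'I_N -> nat) (T : {set 'I_N}).
Implicit Types (f g h p : {mpoly k[N]}) (m : 'X_{1..N}).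
Local Notation inI := (@in_mci_ideal k N D).
Local Notation pr r p := (pihomog (@wT N T) r p).

Lemma pr_inI r p : inI p -> inI (pr r p).
Proof. by move=> /idealK H; apply/idealK => m sm; rewrite pihomogC H // if_same. Qed.

Lemma inI_pr p : (forall r, inI (pr r p)) -> inI p.
Proof.
move=> H; apply/idealK => m sm; have /idealK /(_ m sm) := H (wT T m).
by rewrite pihomogC eqxx.
Qed.

Lemma pr_homog r d p : p \is d.-homog -> pr r p \is d.-homog.
Proof. by move=> /homogC H; apply/homogC => m /H hm; rewrite pihomogC hm if_same. Qed.

Lemma pr_big r d p : p \is d.-homog -> (d < r)%N -> pr r p = 0.
Proof.
move=> /homogC H lt; apply/mpolyP => m; rewrite pihomogC mcoeff0.
case: eqP => // E; apply: H; apply/eqP => E'.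
by move: (wT_le T m); rewrite E E' leqNgt lt.
Qed.

Lemma pr_pr r s p : pr r (pr s p) = if s == r then pr s p else 0.
Proof. by apply: pihomog_homog; apply: pihomogP. Qed.

Variables (b : 'I_N -> k).
Hypothesis hb : forall j, j \in T -> b j = 0.
Let P := lin b.
Let Q := lin (fun j => (j \in T)%:R : k).

Lemma P_whomog : P \is 0.-homog for (@wT N T).
Proof.
apply: lin_whomog => j /=; rewrite wTU; case: (boolP (j \in T)) => // /hb ->.
by rewrite eqxx.
Qed.

Lemma Q_whomog : Q \is 1.-homog for (@wT N T).
Proof. by apply: lin_whomog => j /=; rewrite wTU; case: (j \in T); rewrite ?eqxx. Qed.

Lemma prP r g : pr r (P * g) = P * pr r g.
Proof. by rewrite (pihomogM _ _ P_whomog) leq0n subn0. Qed.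

Lemma prQ r g : pr r (Q * g) = if (0 < r)%N then Q * pr r.-1 g else 0.
Proof. by rewrite (pihomogM _ _ Q_whomog) subn1. Qed.

Lemma mois_weight i : mult_inj_or_surj D P 1 i -> mult_inj_or_surj D (P + Q) 1 i.
Proof.
case=> [Hi|Hs]; [left|right].
  move=> g hg hI; apply: inI_pr => r; elim/ltn_ind: r => r IH.
  have := pr_inI r hI; rewrite mulrDl linearD /= prP prQ.
  case: r IH => [|r] IH /=; first by rewrite addr0 => /Hi; apply; apply: pr_homog.
  move=> h; apply: Hi; first by apply: pr_homog.
  rewrite -[P * _](addrK (Q * pr r g)); apply: inIB => //.
  by apply: inIMl; apply: IH.
move=> h hh.
have PQh : P + Q \is 1.-homog by rewrite linD; apply: lin_homog.
suff [G [hG HG]] : exists G, G \is i.-homog /\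
    forall r, (r < (i + 1).+1)%N -> inI (pr r (h - (P + Q) * G)).
  exists G; split => //; apply: inI_pr => r; case: (ltnP r (i + 1).+1) => hr.
    exact: HG.
  rewrite (pr_big (d := (i + 1)%N)) //; first exact: inI0.
  by apply: rpredB => //; rewrite addnC; apply: dhomogM.
elim: (i + 1).+1 => [|R [G [hG HG]]].
  by exists 0; split; [apply: dhomog0 | ].
set E := pr R (h - (P + Q) * G).
have hE : E \is (i + 1).-homog.
  by apply: pr_homog; apply: rpredB => //; rewrite addnC; apply: dhomogM.
have [g [hg hgI]] := Hs E hE.
exists (G + pr R g); split; first by apply: rpredD => //; apply: pr_homog.
have split r : pr r (h - (P + Q) * (G + pr R g)) = pr r (h - (P + Q) * G)
   - (P * pr r (pr R g) + (if (0 < r)%N then Q * pr r.-1 (pr R g) else 0)).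
  have e1 : pr r ((P + Q) * pr R g) = P * pr r (pr R g) +
      (if (0 < r)%N then Q * pr r.-1 (pr R g) else 0).
    by rewrite mulrDl linearD /= prP prQ.
  by rewrite mulrDr opprD addrA -e1; apply: linearB.
move=> r; rewrite ltnS leq_eqVlt => /orP [/eqP ->|hr]; rewrite split !pr_pr.
  rewrite eqxx; have -> : (if (0 < R)%N then Q * (if R == R.-1 then pr R g else 0) else 0) = 0.
    by case: ifP => // h0; rewrite neq_pred // mulr0.
  rewrite addr0 -/E; have := pr_inI R hgI; rewrite linearB /= prP pr_pr eqxx.
  by [].
rewrite (gtn_eqF hr) mulr0 add0r.
have -> : (if (0 < r)%N then Q * (if R == r.-1 then pr R g else 0) else 0) = 0.
  case: r hr {split} => //= r hr; rewrite ifN ?mulr0 //.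
  by apply/negP => /eqP E'; move: hr; rewrite E' ltnNge leqnSn.
by rewrite subr0; apply: HG.
Qed.

End Weights.

Lemma wlp_sum (k : fieldType) (N : nat) (D : 'I_N -> nat) :
  has_WLP k D -> forall i, mult_inj_or_surj D (\sum_(j < N) 'X_j : {mpoly k[N]}) 1 i.
Proof.
case=> l [hl H] i.
pose a := fun j => l@_U_(j).
pose c := fun j => if a j != 0 then (a j)^-1 else 1.
have hc : forall j, c j != 0.
  by move=> j; rewrite /c; case: ifP => [h|_]; [rewrite invr_eq0 | apply: oner_neq0].
have := mois_sc hc (H i); rewrite (lin_homog1 hl) -/a sc_lin.
pose T := [set j | a j == 0].
pose b := fun j => ((a j != 0)%:R : k).
have E1 : lin (fun j => a j * c j) = lin b.
  apply: lin_ext => j; rewrite /b /c; case: ifP => h; first by rewrite mulfV.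
  by move/negbFE: h => /eqP ->; rewrite mul0r.
rewrite E1 => Hb.
have hb : forall j, j \in T -> b j = 0 by move=> j; rewrite inE /b => ->.
have := mois_weight hb Hb; rewrite linD.
have -> : lin (fun j => b j + (j \in T)%:R) = \sum_(j < N) 'X_j.
  rewrite /lin; apply: eq_bigr => j _; rewrite /b inE.
  by case: (a j == 0) => /=; rewrite ?add0r ?addr0 scale1r.
done.
Qed.


Lemma pihomog_inI (k : fieldType) N (D : 'I_N -> nat) (mf : measure N) r (p : {mpoly k[N]}) :
  in_mci_ideal D p -> in_mci_ideal D (pihomog mf r p).
Proof. by move=> /idealK H; apply/idealK => m sm; rewrite pihomogC H // if_same. Qed.

Lemma surj_relax (k : fieldType) N (D : 'I_N -> nat) (f : {mpoly k[N]}) e i :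
  f \is e.-homog ->
  (forall h : {mpoly k[N]}, h \is (i + e)%N.-homog -> exists g, in_mci_ideal D (h - f * g)) ->
  (forall h : {mpoly k[N]}, h \is (i + e)%N.-homog ->
     exists g, g \is i.-homog /\ in_mci_ideal D (h - f * g)).
Proof.
move=> hf H h hh; have [g hg] := H h hh.
exists (pihomog mdeg i g); split; first exact: pihomogP.
have := pihomog_inI mdeg (i + e) hg.
by rewrite linearB /= (pihomog_dE hh) (pihomogM _ _ hf) leq_addl addnK.
Qed.

Lemma inI_ext (k : fieldType) N (D1 D2 : 'I_N -> nat) (f : {mpoly k[N]}) :
  (forall j, D1 j = D2 j) -> in_mci_ideal D1 f -> in_mci_ideal D2 f.
Proof.
move=> E /idealK H; apply/idealK => m /forallP sm; apply: H; apply/forallP => j.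
by rewrite E.
Qed.

Lemma mois_ext (k : fieldType) N (D1 D2 : 'I_N -> nat) (f : {mpoly k[N]}) e i :
  (forall j, D1 j = D2 j) -> mult_inj_or_surj D1 f e i -> mult_inj_or_surj D2 f e i.
Proof.
move=> E; have E' : forall j, D2 j = D1 j by move=> j; rewrite E.
case=> [H|H]; [left|right].
  by move=> g hg /(inI_ext E') /(H g hg) /(inI_ext E).
move=> h hh; have [g [hg hI]] := H h hh; exists g; split => //.
exact: inI_ext E hI.
Qed.

Section MU.
Variables (k : fieldType) (n : nat).
Local Notation widen := (widen_ord (leqnSn n)).
Implicit Types (m : 'X_{1..n}) (M : 'X_{1..n.+1}).

Definition rest M : 'X_{1..n} := [multinom M (widen i) | i < n].
Definition ext m t : 'X_{1..n.+1} := (mnmwiden m + U_(ord_max) *+ t)%MM.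

Lemma ord_split (P : 'I_n.+1 -> Prop) : P ord_max -> (forall j, P (widen j)) -> forall i, P i.
Proof.
move=> h1 h2 i; case: (unliftP ord_max i) => [j ->|->] //.
by have -> : lift ord_max j = widen j by apply: val_inj; rewrite /= /bump leqNgt ltn_ord.
Qed.

Lemma ext_widen m t i : ext m t (widen i) = m i.
Proof.
rewrite mnmDE mnmwiden_widen mulmnE mnm1E.
have E : (ord_max == widen i) = false.
  by rewrite -val_eqE /= (gtn_eqF (ltn_ord i)).
by rewrite E mul0n addn0.
Qed.

Lemma ext_max m t : ext m t ord_max = t.
Proof. by rewrite mnmDE mnmwiden_ordmax mulmnE mnm1E eqxx mul1n. Qed.

Lemma rest_ext m t : rest (ext m t) = m.
Proof. by apply/mnmP => i; rewrite mnmE ext_widen. Qed.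

Lemma ext_rest M : ext (rest M) (M ord_max) = M.
Proof.
apply/mnmP; apply: ord_split; first by rewrite ext_max.
by move=> j; rewrite ext_widen mnmE.
Qed.

Lemma eq_ext M m t : (M == ext m t) = (rest M == m) && (M ord_max == t).
Proof.
apply/eqP/andP => [->|[/eqP <- /eqP <-]]; last by rewrite ext_rest.
by rewrite rest_ext ext_max.
Qed.

Lemma mdeg_split M : mdeg M = (mdeg (rest M) + M ord_max)%N.
Proof. by rewrite !mdegE big_ord_recr /=; congr (_ + _)%N; apply: eq_bigr => i _; rewrite mnmE. Qed.

Lemma mdeg_ext m t : mdeg (ext m t) = (mdeg m + t)%N.
Proof. by rewrite mdeg_split rest_ext ext_max. Qed.

Lemma mwidenCoef (b : {mpoly k[n]}) M :
  (mwiden b)@_M = if M ord_max == 0%N then b@_(rest M) else 0.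
Proof.
rewrite {1}[b]mpolyE (rmorph_sum (@mwiden n k)) raddf_sum /=.
under eq_bigr do rewrite mwidenZ mwidenX mcoeffZ mcoeffX.
case: ifP => h.
  have EM : M = mnmwiden (rest M).
    by rewrite -[M in LHS]ext_rest (eqP h) /ext mulm0n addm0.
  rewrite -[RHS]mul1r -(sum_msupp_coef (fun _ => 1)); apply: eq_bigr => m _.
  by rewrite mul1r {1}EM (inj_eq (@inj_mnmwiden _)).
rewrite big1 // => m _; case: eqP => [E|]; last by rewrite mulr0.
by move: h; rewrite -E mnmwiden_ordmax.
Qed.

Lemma muniX M : muni 'X_[M] = 'X_[rest M] *: 'X^(M ord_max) :> {poly {mpoly k[n]}}.
Proof. by rewrite muniE msuppX big_seq1 mcoeffX eqxx scale1r. Qed.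

Lemma muniXCoef M m t : (((muni 'X_[M] : {poly {mpoly k[n]}})`_t)@_m) = (M == ext m t)%:R.
Proof.
rewrite muniX coefZ coefXn eq_ext.
case: eqP => [->|ne]; last first.
  rewrite mulr0 mcoeff0 andbC; case: eqP => // E; by case: ne.
by rewrite mulr1 mcoeffX eqxx andbT.
Qed.

Lemma muniCoef (x : {mpoly k[n.+1]}) m t : ((muni x)`_t)@_m = x@_(ext m t).
Proof.
rewrite {1}[x]mpolyE (raddf_sum (@muni n k)) coef_sum raddf_sum /=.
rewrite -[RHS]mul1r -(sum_msupp_coef (fun _ => 1)); apply: eq_bigr => M _.
by rewrite muniZ coefZ mcoeffCM muniXCoef mul1r.
Qed.

Lemma muni_mwiden (b : {mpoly k[n]}) : muni (mwiden b) = b%:P.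
Proof.
apply/polyP => t; apply/mpolyP => m.
rewrite muniCoef mwidenCoef ext_max rest_ext coefC.
by case: eqP => // _; rewrite mcoeff0.
Qed.

Lemma rest_U : rest U_(ord_max) = 0%MM.
Proof.
apply/mnmP => i; rewrite !mnmE.
by have -> : (ord_max == widen i) = false by rewrite -val_eqE /= (gtn_eqF (ltn_ord i)).
Qed.

Lemma muni_y : muni ('X_ord_max : {mpoly k[n.+1]}) = 'X.
Proof. by rewrite muniX rest_U mpolyX0 mnm1E eqxx expr1 scale1r. Qed.

Lemma sum_split :
  \sum_(j < n.+1) ('X_j : {mpoly k[n.+1]}) = mwiden (\sum_(j < n) 'X_j) + 'X_ord_max.
Proof.
rewrite big_ord_recr /= (rmorph_sum (@mwiden n k)); congr (_ + _).
by apply: eq_bigr => j _ /=; rewrite mwidenX mnmwiden1.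
Qed.

Variable (D : 'I_n.+1 -> nat).
Let DB := fun j : 'I_n => D (widen j).

Lemma idealA (x : {mpoly k[n.+1]}) : in_mci_ideal D x <->
  (forall t, (t < D ord_max)%N -> in_mci_ideal DB ((muni x)`_t)).
Proof.
split.
  move=> /idealK H t ht; apply/idealK => m /forallP sm; rewrite muniCoef H //.
  apply/forallP; apply: ord_split; first by rewrite ext_max.
  by move=> j; rewrite ext_widen; apply: sm.
move=> H; apply/idealK => M /forallP sM; rewrite -[M]ext_rest -muniCoef.
move/idealK: (H _ (sM ord_max)); apply; apply/forallP => j; rewrite mnmE.
exact: sM.
Qed.

Lemma homogA (x : {mpoly k[n.+1]}) i t : x \is i.-homog ->
  (muni x)`_t \is (i - t)%N.-homog /\ ((i < t)%N -> (muni x)`_t = 0).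
Proof.
move=> /homogC H; split.
  apply/homogC => m hm; rewrite muniCoef; apply: H; rewrite /= mdeg_ext.
  apply: contra hm => /eqP <-; by rewrite addnK.
move=> lt; apply/mpolyP => m; rewrite muniCoef mcoeff0 H // /= mdeg_ext.
apply/eqP => E; move: lt; rewrite -E ltnNge; by rewrite leq_addl.
Qed.

Lemma mwiden_homog (b : {mpoly k[n]}) e : b \is e.-homog -> mwiden b \is e.-homog.
Proof.
move=> /homogC H; apply/homogC => M hM; rewrite mwidenCoef.
case: eqP => // h0; apply: H; apply: contra hM; by rewrite /= mdeg_split h0 addn0.
Qed.

Lemma build K (c : nat -> {mpoly k[n]}) :
  muni (\sum_(t < K) mwiden (c t) * 'X_ord_max ^+ t) = \poly_(t < K) c t.
Proof.
rewrite (rmorph_sum (@muni n k)) poly_def; apply: eq_bigr => t _ /=.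
by rewrite rmorphM rmorphXn /= muni_mwiden muni_y mul_polyC.
Qed.

Lemma build_homog K (c : nat -> {mpoly k[n]}) i :
  (forall t, (t < K)%N -> (t <= i)%N /\ c t \is (i - t)%N.-homog) ->
  \sum_(t < K) mwiden (c t) * 'X_ord_max ^+ t \is i.-homog.
Proof.
move=> H; apply: rpred_sum => t _; have [le hc] := H t (ltn_ord t).
rewrite -(subnK le); apply: dhomogM; first exact: mwiden_homog.
have hy : ('X_ord_max : {mpoly k[n.+1]}) \is 1.-homog by rewrite dhomogX /= mdeg1.
by have := dhomogMn t hy; rewrite mul1n.
Qed.

Hypothesis hdd : (0 < D ord_max)%N.
Local Notation dd := (D ord_max).
Let L : {mpoly k[n]} := \sum_(j < n) 'X_j.
Local Notation inB := (@in_mci_ideal k n DB).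
Local Notation inA := (@in_mci_ideal k n.+1 D).
Let l0 : {mpoly k[n.+1]} := \sum_(j < n.+1) 'X_j.

Lemma muni_l0 : muni l0 = L%:P + 'X.
Proof. by rewrite /l0 sum_split rmorphD /= muni_mwiden muni_y. Qed.

Lemma coef_l0 p t : ((L%:P + 'X) * p)`_t = L * p`_t + (if t == 0%N then 0 else p`_t.-1).
Proof. by rewrite mulrDl coefD coefCM coefXM. Qed.

Lemma L_homog : L \is 1.-homog.
Proof. by apply: rpred_sum => j _; rewrite dhomogX /= mdeg1. Qed.

Lemma REC (c : nat -> {mpoly k[n]}) :
  (forall t, (0 < t)%N -> (t < dd)%N -> inB (L * c t + c t.-1)) ->
  forall s, (s < dd)%N -> inB (c (dd.-1 - s)%N - (-L)^+s * c dd.-1).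
Proof.
move=> H; elim=> [|s IH] hs.
  by rewrite subn0 expr0 mul1r subrr; apply: inI0.
have hs' : (s < dd)%N by apply: ltnW.
have h1 := H (dd.-1 - s)%N ltac:(lia) ltac:(lia).
have e : (dd.-1 - s).-1 = (dd.-1 - s.+1)%N by lia.
rewrite e in h1; have h2 := inIMl L (IH hs').
have := inIB h1 h2.
set ct := c (dd.-1 - s)%N; set cd := c dd.-1; set cp := c (dd.-1 - s.+1)%N.
by have -> : cp - (-L)^+s.+1 * cd = (L * ct + cp) - L * (ct - (-L)^+s * cd)
  by rewrite exprS; ring.
Qed.

Lemma LdE (x : {mpoly k[n]}) : L * ((-L)^+dd.-1 * x) = L^+dd * ((-1)^+dd.-1 * x).
Proof.
rewrite -{2}(prednK hdd) exprS (exprNn L); ring.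
Qed.

Lemma inj_back i :
  ((dd <= i.+1)%N -> forall b, b \is (i.+1 - dd)%N.-homog -> inB (L^+dd * b) -> inB b) ->
  forall g, g \is i.-homog -> inA (l0 * g) -> inA g.
Proof.
move=> Hb g hg; rewrite idealA rmorphM /= muni_l0 => H.
set c := fun t => (muni g)`_t.
have Hr := REC (c := c) (fun t t0 tdd => ltac:(by move: (H t tdd); rewrite coef_l0 (gtn_eqF t0))).
have H0 := H 0%N hdd; rewrite coef_l0 eqxx addr0 in H0.
have Hl : inB (L^+dd * c dd.-1).
  have h3 := inIMl L (Hr dd.-1 ltac:(lia)); rewrite subnn in h3.
  have h4 := inIB H0 h3.
  have e : L * c 0%N - L * (c 0%N - (-L)^+dd.-1 * c dd.-1) =
      (-1)^+dd.-1 * (L^+dd * c dd.-1) by rewrite mulrCA -LdE; ring.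
  rewrite e in h4; have := inIMl ((-1)^+dd.-1) h4.
  by rewrite mulrA -exprMn mulrNN mulr1 expr1n mul1r.
have Hd : inB (c dd.-1).
  case: (leqP dd i.+1) => hi.
    apply: (Hb hi) => //.
    have [hh _] := homogA dd.-1 hg.
    have e : (i - dd.-1 = i.+1 - dd)%N by lia.
    by rewrite -e.
  rewrite /c; have [_ ->] := homogA dd.-1 hg; [exact: inI0 | lia].
apply/idealA => t ht; have := Hr (dd.-1 - t)%N ltac:(lia).
rewrite subKn; last by lia.
move=> h; apply: inI_eq h _; exact: inIMl.
Qed.


Lemma inj_fwd i : (dd <= i.+1)%N ->
  (forall g, g \is i.-homog -> inA (l0 * g) -> inA g) ->
  forall b, b \is (i.+1 - dd)%N.-homog -> inB (L^+dd * b) -> inB b.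
Proof.
move=> hi Hg b hb hL.
pose c := fun t => (-L)^+(dd.-1 - t) * b.
pose g := \sum_(t < dd) mwiden (c t) * 'X_ord_max ^+ t.
have hLn : -L \is 1.-homog by rewrite rpredN L_homog.
have hgh : g \is i.-homog.
  apply: build_homog => t ht; split; first lia.
  have e : (i - t = (dd.-1 - t) + (i.+1 - dd))%N by lia.
  rewrite e; apply: dhomogM => //.
  by have := dhomogMn (dd.-1 - t) hLn; rewrite mul1n.
have Hm : muni g = \poly_(t < dd) c t by apply: build.
have HA : inA (l0 * g).
  apply/idealA => t ht; rewrite rmorphM /= muni_l0 Hm coef_l0 !coef_poly ht.
  case: eqP => [->|/eqP t0].
    rewrite addr0 /c subn0 LdE mulrCA; exact: inIMl.
  have -> : (t.-1 < dd)%N by lia.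
  have e : (dd.-1 - t.-1 = (dd.-1 - t).+1)%N by lia.
  rewrite /c e exprS.
  have -> : L * ((- L) ^+ (dd.-1 - t) * b) + - L * (- L) ^+ (dd.-1 - t) * b = 0 by ring.
  exact: inI0.
move: (Hg g hgh HA) => /idealA /(_ dd.-1 ltac:(lia)).
by rewrite Hm coef_poly (_ : (dd.-1 < dd)%N) /c ?subnn ?expr0 ?mul1r //; lia.
Qed.

Lemma surj_fwd i : (dd <= i.+1)%N ->
  (forall h, h \is i.+1.-homog -> exists g, g \is i.-homog /\ inA (h - l0 * g)) ->
  forall H, H \is (i.+1 - dd + dd)%N.-homog -> exists c, inB (H - L^+dd * c).
Proof.
move=> hi Hs H hH; rewrite subnK // in hH.
have [g [_ hg]] := Hs _ (mwiden_homog hH).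
move: hg; rewrite idealA rmorphB rmorphM /= muni_mwiden muni_l0 => Hg.
set c := fun t => (muni g)`_t.
have Hr := REC (c := c) (fun t t0 tdd => ltac:(
  by move: (Hg t tdd); rewrite coefB coefC coef_l0 (gtn_eqF t0) sub0r => /inIN; rewrite opprK)).
have H0 := Hg 0%N hdd; rewrite coefB coefC coef_l0 eqxx addr0 in H0.
exists ((-1)^+dd.-1 * c dd.-1).
have h3 := inIMl L (Hr dd.-1 ltac:(lia)); rewrite subnn in h3.
have := inID H0 h3.
have e : H - L * c 0%N + L * (c 0%N - (-L)^+dd.-1 * c dd.-1) =
   H - L^+dd * ((-1)^+dd.-1 * c dd.-1) by rewrite -LdE; ring.
by rewrite e.
Qed.

Lemma surj_back i : (dd <= i.+1)%N ->
  (forall H, H \is (i.+1 - dd + dd)%N.-homog -> exists c, c \is (i.+1 - dd)%N.-homog /\ inB (H - L^+dd * c)) ->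
  forall h, h \is i.+1.-homog -> exists g, inA (h - l0 * g).
Proof.
move=> hi Hs h hh.
set q := muni h; set a := -L.
have hLn : a \is 1.-homog by rewrite rpredN L_homog.
have [Q EQ] : exists Q, q - (q.[a])%:P = Q * ('X - a%:P).
  by apply/factor_theorem; rewrite /root hornerD hornerN hornerC subrr.
have [Gp EG] : exists Gp, 'X^dd - (a^+dd)%:P = Gp * ('X - a%:P).
  by apply/factor_theorem; rewrite /root hornerD hornerN hornerXn hornerC subrr.
have hHh : q.[a] \is (i.+1 - dd + dd)%N.-homog.
  rewrite subnK // horner_coef; apply: rpred_sum => s _.
  case: (leqP s i.+1) => hs.
    have [hc _] := homogA s hh; rewrite -(subnK hs); apply: dhomogM => //.
    by have := dhomogMn s hLn; rewrite mul1n.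
  have [_ ->] := homogA s hh => //; rewrite mul0r; exact: dhomog0.
have [c0 [_ Hc]] := Hs _ hHh.
pose e := (-1)^+dd * c0.
pose p := Q - Gp * e%:P.
exists (\sum_(t < size p) mwiden (p`_t) * 'X_ord_max ^+ t).
apply/idealA => t ht.
rewrite rmorphB rmorphM /= build coefK muni_l0 -/q.
have Ep : q - (L%:P + 'X) * p = (q.[a] - a^+dd * e)%:P + 'X^dd * e%:P.
  have eX : L%:P + 'X = 'X - a%:P by rewrite /a polyCN opprK addrC.
  rewrite eX /p mulrC mulrBl -EQ mulrAC -EG polyCB (polyCM (a^+dd) e); ring.
rewrite Ep coefD coefC coefXnM ht addr0.
case: t ht => [|t] ht /=; last exact: inI0.
have s1 : (-1)^+dd * (-1)^+dd = 1 :> {mpoly k[n]} by rewrite -exprMn mulrNN mulr1 expr1n.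
have -> : a^+dd * e = L^+dd * ((-1)^+dd * (-1)^+dd * c0) by rewrite /a /e (exprNn L); ring.
by rewrite s1 mul1r.
Qed.

End MU.


Unset Implicit Arguments.
Theorem lemma4p7 (k : fieldType) (n : nat) (hn : (2 <= n)%N)
    (d : 'I_n -> nat) (hd : forall j : 'I_n, (0 < d j)%N) :
  has_WLP k d <->
  (forall i : nat,
     mult_inj_or_surj (init_exps d)
       ((\sum_(j < n.-1) 'X_j : {mpoly k[n.-1]}) ^+ d (last_index (ltnW hn)))
       (d (last_index (ltnW hn))) i).
Proof.
case: n hn d hd => [//|n] hn d hd.
have El : last_index (ltnW hn) = ord_max by apply: val_inj.
rewrite El /=.
have hdd : (0 < d ord_max)%N := hd ord_max.
set dd := d ord_max.
set DB := fun j : 'I_n => d (widen_ord (leqnSn n) j).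
have EB : forall j, init_exps d j = DB j.
  by move=> j; rewrite /init_exps /DB; congr (d _); apply: val_inj.
have EB' : forall j, DB j = init_exps d j by move=> j; rewrite EB.
have hL : (\sum_(j < n) 'X_j : {mpoly k[n]}) ^+ dd \is dd.-homog.
  have hL1 : (\sum_(j < n) 'X_j : {mpoly k[n]}) \is 1.-homog.
    by apply: rpred_sum => j _; rewrite dhomogX /= mdeg1.
  by have := dhomogMn dd hL1; rewrite mul1n.
have hl0 : (\sum_(j < n.+1) 'X_j : {mpoly k[n.+1]}) \is 1.-homog.
  by apply: rpred_sum => j _; rewrite dhomogX /= mdeg1.
split.
  move=> W i; apply: (mois_ext EB').
  have Hl := wlp_sum W (i + dd).-1.
  have e1 : ((i + dd).-1.+1 = i + dd)%N by lia.
  have hi : (dd <= (i + dd).-1.+1)%N by lia.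
  have e2 : ((i + dd).-1.+1 - dd = i)%N by lia.
  case: Hl => [Hi|Hs]; [left|right].
    move=> b hb hI; have := inj_fwd hdd hi Hi; rewrite e2; apply => //.
  apply: (surj_relax hL) => h hh.
  have := surj_fwd hdd hi; rewrite e2; apply => //.
    by move=> h' hh'; apply: Hs; rewrite addn1.
move=> R; exists (\sum_(j < n.+1) 'X_j); split => // i.
case: (leqP dd i.+1) => hi.
  have := R (i.+1 - dd)%N; move/(mois_ext EB) => [Hi|Hs]; [left|right].
    by move=> g hg hI; apply: (inj_back hdd _ hg hI) => _.
  apply: (surj_relax hl0) => h hh.
  by apply: (surj_back hi) => //; rewrite -[i.+1]addn1.
left => g hg hI; apply: (inj_back hdd _ hg hI) => hle.
by exfalso; move: hle; rewrite leqNgt hi.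
Qed.
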